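(* For any digraph $G$ and any field $\mathbb F$, $\rho(G)=h_1^{\rm twist}(\underline{\mathbb F})$, where $\underline{\mathbb F}$ is the structure sheaf of $G$.
   Context: A digraph $G$ has finite vertex set $V_G$, edge set $E_G$, and tail/head maps $t_G,h_G\colon E_G\to V_G$ (multiple edges and loops allowed). The structure sheaf $\underline{\mathbb F}$ assigns $\mathbb F$ to every vertex and edge, with all restriction maps the identity. For a sheaf $\mathcal F$ (values $\mathcal F(P)$, restriction maps $\mathcal F(t,e)\colon\mathcal F(e)\to\mathcal F(t_Ge)$, $\mathcal F(h,e)\colon\mathcal F(e)\to\mathcal F(h_Ge)$), let $\psi(e)$, $e\in E_G$, be independent indeterminates and $\mathcal F^\psi$ the sheaf of $\mathbb F(\psi)$-spaces with values $\mathcal F(P)\otimes\mathbb F(\psi)$, head maps $\mathcal F(h,e)$, tail maps $\psi(e)\mathcal F(t,e)$; $h_1^{\rm twist}(\mathcal F)$ is the $\mathbb F(\psi)$-dimension of the kernel of $d=d_h-d_t\colon\bigoplus_e\mathcal F^\psi(e)\to\bigoplus_v\mathcal F^\psi(v)$, where $d_h$ (resp. $d_t$) sends the summand of $e$ to that of $h_Ge$ (resp. $t_Ge$) via the head (resp. tail) map. Regarding $G$ as undirected, for a connected component $X$ let $h_1(X)=|E_X|-|V_X|+1$, and $\rho(G)=\sum_X\max(0,h_1(X)-1)$ over connected components. *)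

(* Defs.v *)
From HB Require Import structures.
From mathcomp Require Import all_boot all_order all_algebra.
Set Implicit Arguments. Unset Strict Implicit. Unset Printing Implicit Defensive.
Import Order.TTheory GRing.Theory Num.Theory.
Local Open Scope ring_scope.

(* Rational function field F(x_0, ..., x_{n-1}), built as iterated
   fraction fields: F(x_0..x_{n-1}) = Frac( F(x_0..x_{n-2})[x_{n-1}] ). *)
Fixpoint ratfun (F : fieldType) (n : nat) : fieldType :=
  match n with
  | 0 => F
  | n'.+1 => {fraction {poly ratfun F n'}}
  end.

Definition ratfun_emb (F : fieldType) (n : nat) (x : ratfun F n) : ratfun F n.+1 :=
  @FracField.tofrac _ (x%:P).

Fixpoint indet (F : fieldType) (n : nat) (i : nat) : ratfun F n :=
  match n return ratfun F n with
  | 0 => 0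
  | n'.+1 => if i == n' then @FracField.tofrac _ 'X
             else ratfun_emb (indet F n' i)
  end.

(* A digraph with vertex set 'I_nV, edge set 'I_nE, tail t and head h.
   Twisted coboundary d = d_h - d_t of the twisted structure sheaf, as a
   matrix acting on row vectors (u |-> u *m d) indexed by edges (rows) and
   vertices (columns), over F(psi), psi(e) = indet e. *)
Definition twisted_d (F : fieldType) (nV nE : nat) (t h : 'I_nE -> 'I_nV)
  : 'M[ratfun F nE]_(nE, nV) :=
  \matrix_(e < nE, v < nV)
     ((h e == v)%:R - indet F nE e * (t e == v)%:R).

Definition h1_twist_struct (F : fieldType) (nV nE : nat) (t h : 'I_nE -> 'I_nV)
  : nat := \rank (kermx (twisted_d F t h)).

Definition uadj (nV nE : nat) (t h : 'I_nE -> 'I_nV) : rel 'I_nV :=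
  fun x y => [exists e, ((t e == x) && (h e == y)) || ((t e == y) && (h e == x))].

Definition components (nV nE : nat) (t h : 'I_nE -> 'I_nV) : {set {set 'I_nV}} :=
  [set [set y | connect (uadj t h) x y] | x in [set: 'I_nV]].

Definition h1_comp (nV nE : nat) (t h : 'I_nE -> 'I_nV) (X : {set 'I_nV}) : int :=
  (#|[set e | t e \in X]|%:Z - #|X|%:Z + 1)%R.

Definition rho (nV nE : nat) (t h : 'I_nE -> 'I_nV) : int :=
  \sum_(X in components t h) Num.max 0 (h1_comp t h X - 1).

(* Main.v *)
Require Import Defs.
From HB Require Import structures.
From mathcomp Require Import all_boot all_order all_algebra.
Set Implicit Arguments. Unset Strict Implicit. Unset Printing Implicit Defensive.
Import Order.TTheory GRing.Theory Num.Theory.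
Local Open Scope ring_scope.
Section Diag.
Variable R : fieldType.

Lemma rank_sum_le (I : finType) (P : pred I) m n (G : I -> 'M[R]_(m, n)) :
  (\rank (\sum_(i | P i) G i)%R <= \sum_(i | P i) \rank (G i))%N.
Proof.
apply: (big_rec2 (fun a (B : 'M[R]_(m, n)) => \rank B <= a)%N); first by rewrite mxrank0.
by move=> i a B _ IH; rewrite (leq_trans (mxrank_add _ _)) // leq_add2l.
Qed.

Lemma rank_diag01_le n (S : {set 'I_n}) :
  (\rank (diag_mx (\row_j (j \in S)%:R) : 'M[R]_n) <= #|S|)%N.
Proof.
rewrite diag_mx_sum_delta (leq_trans (rank_sum_le _ _)) //.
rewrite -sum1_card [X in (_ <= X)%N]big_mkcond /= leq_sum // => i _; rewrite mxE.
by case: (i \in S); rewrite ?scale1r ?scale0r ?mxrank_delta ?mxrank0.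
Qed.

Lemma rank_diag01 n (S : {set 'I_n}) :
  \rank (diag_mx (\row_j (j \in S)%:R) : 'M[R]_n) = #|S|.
Proof.
apply/eqP; rewrite eqn_leq rank_diag01_le /=.
have e1 : (1%:M : 'M[R]_n) = diag_mx (\row_j (j \in S)%:R) + diag_mx (\row_j (j \in ~: S)%:R).
  apply/matrixP => i j; rewrite !mxE inE.
  by case: (i \in S); case: (i == j); rewrite ?mulr1n ?mulr0n ?addr0 ?add0r.
have := mxrank_add (diag_mx (\row_j (j \in S)%:R) : 'M[R]_n) (diag_mx (\row_j (j \in ~: S)%:R)).
rewrite -e1 mxrank1 => H.
have H2 := rank_diag01_le (~: S).
rewrite cardsCs setCK card_ord in H2.
rewrite -(leq_add2r (n - #|S|)) subnKC ?(leq_trans H) ?leq_add2l //.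
by rewrite (leq_trans (max_card _)) // card_ord.
Qed.
End Diag.

Section Key.
Variable K : fieldType.
Local Notation L := {fraction {poly K}}.
Local Notation f := (@FracField.tofrac {poly K} \o polyC)%FUN.
Local Notation XX := (@FracField.tofrac {poly K} 'X).

Lemma key_scalar (x y : K) : f x - XX * f y = 0 -> y = 0.
Proof.
rewrite /= -rmorphM -rmorphB => /eqP; rewrite tofrac_eq0 => /eqP H; have := congr1 (fun p : {poly K} => p`_1) H.
rewrite coefB coefC coefXM /= coefC /= coef0 sub0r => /eqP; by rewrite oppr_eq0 => /eqP.
Qed.

Lemma key_row m n (M0 : 'M[K]_(m, n)) (a b : 'I_n) :
  ((delta_mx 0 a : 'rV[L]_n) - XX *: (delta_mx 0 b : 'rV[L]_n) <= map_mx f M0)%MS ->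
  ((delta_mx 0 b : 'rV[K]_n) <= M0)%MS.
Proof.
rewrite !submxE -map_cokermx => /eqP H; apply/eqP/rowP => j.
move/rowP: H => /(_ j).
rewrite mulmxBl -scalemxAl -!rowE !mxE /= => /key_scalar.
by [].
Qed.
End Key.
Section S.
Variable F : fieldType.

Definition embf (n : nat) : {rmorphism ratfun F n -> ratfun F n.+1} :=
  (@FracField.tofrac {poly ratfun F n} \o polyC)%FUN.

Lemma embfE n x : embf n x = ratfun_emb x.
Proof. by []. Qed.

Lemma indetS n i : (i < n)%N -> indet F n.+1 i = embf n (indet F n i).
Proof. by move=> lt; rewrite /= ifN // neq_ltn lt. Qed.

Lemma indet_top n : indet F n.+1 n = @FracField.tofrac _ 'X.
Proof. by rewrite /= eqxx. Qed.

Lemma indet_neq0 n i : (i < n)%N -> indet F n i != 0.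
Proof.
elim: n => [//|n IH] lt /=; case: ifP => [_|/negbT ne].
  by rewrite tofrac_eq0 polyX_eq0.
rewrite -embfE fmorph_eq0 IH //.
by move: lt; rewrite ltnS leq_eqVlt (negbTE ne).
Qed.

Variable nV : nat.

Definition dA nE (t h : 'I_nE -> 'I_nV) (A : {set 'I_nE}) : 'M[ratfun F nE]_(nE, nV) :=
  \matrix_(e, v) ((e \in A)%:R * twisted_d F t h e v).

Definition ev (R : nzRingType) (v : 'I_nV) : 'rV[R]_nV := delta_mx 0 v.

Definition Sset nE (t h : 'I_nE -> 'I_nV) (A : {set 'I_nE}) : {set 'I_nE} :=
  [set e in A | ~~ (ev _ (t e) <= dA t h A)%MS].

Lemma Ulemma nE (t h : 'I_nE -> 'I_nV) (A : {set 'I_nE}) :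
  (#|Sset t h A| <= \rank (dA t h A))%N.
Proof.
elim: nE t h A => [|n IH] t h A.
  by rewrite (leq_trans (max_card _)) // card_ord.
pose w := widen_ord (leqnSn n).
pose l : 'I_n.+1 := ord_max.
pose t' := t \o w; pose h' := h \o w.
pose A' := [set e : 'I_n | w e \in A].
pose M := map_mx (embf n) (dA t' h' A').
have rowM i : row i M = row (w i) (dA t h A).
  apply/rowP => v; rewrite !mxE rmorphM rmorphB rmorphM !rmorph_nat.
  by rewrite inE -indetS.
have MA : (M <= dA t h A)%MS.
  by apply/row_subP => i; rewrite rowM row_sub.
have rowl : l \in A -> row l (dA t h A) =
    ev _ (h l) - (@FracField.tofrac _ 'X) *: ev _ (t l).
  move=> lA; apply/rowP => v; rewrite !mxE lA mul1r indet_top.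
  by rewrite !(eq_sym v) mulrC.
have evM v : (ev _ v <= dA t' h' A')%MS -> (ev _ v <= M)%MS.
  by rewrite -(map_submx (embf n)) /ev map_delta_mx.
have SA : (#|Sset t h A| <= (l \in Sset t h A) + #|Sset t' h' A'|)%N.
  rewrite (cardsD1 l) leq_add2l.
  have -> : #|Sset t' h' A'| = #|w @: Sset t' h' A'|.
    by rewrite card_imset //; by move=> x y /(congr1 val) /= /val_inj.
  apply: subset_leq_card; apply/subsetP => e; rewrite !inE => /andP[ne /andP[eA ne2]].
  have lt : (e < n)%N by rewrite ltn_neqAle -ltnS ltn_ord andbT; exact: ne.
  apply/imsetP; exists (Ordinal lt); last by apply: val_inj.
  have we : w (Ordinal lt) = e by apply: val_inj.
  rewrite !inE we eA /=; apply: contra ne2 => /evM sub.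
  by rewrite /t' /= we in sub; apply: submx_trans sub MA.
have rM : \rank M = \rank (dA t' h' A') by apply: mxrank_map.
have IH' := IH t' h' A'.
apply: (leq_trans SA); case: (boolP (l \in Sset t h A)) => lS; last first.
  by rewrite add0n (leq_trans IH') // -rM mxrankS.
move: (lS); rewrite inE => /andP[lA nsat].
have nrM : ~~ (row l (dA t h A) <= M)%MS.
  apply: contra nsat; rewrite rowl // => /key_row sub.
  by apply: submx_trans (evM _ sub) MA.
have lt : (M < M + row l (dA t h A))%MS.
  by rewrite ltmxE addsmxSl /= addsmx_sub submx_refl.
rewrite add1n (leq_trans _ (mxrankS (_ : (M + row l (dA t h A) <= dA t h A)%MS))) //.
  by rewrite (leq_trans _ (rank_ltmx lt)) // ltnS rM.
by rewrite (addsmx_sub M (row l (dA t h A)) (dA t h A)) MA row_sub.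
Qed.
End S.

Section Main.
Variables (F : fieldType) (nV nE : nat) (t h : 'I_nE -> 'I_nV).

Local Notation d := (twisted_d F t h).
Local Notation K := (ratfun F nE).
Local Notation D := (dA F t h).

Definition AX (X : {set 'I_nV}) : {set 'I_nE} := [set e | t e \in X].
Definition closedV (X : {set 'I_nV}) := forall e, (t e \in X) = (h e \in X).
Definition Q (X : {set 'I_nV}) : 'M[K]_nV := diag_mx (\row_j (j \in X)%:R).
Definition PE (A : {set 'I_nE}) : 'M[K]_nE := diag_mx (\row_j (j \in A)%:R).

Lemma DPE A : D A = PE A *m d.
Proof. by apply/matrixP => i j; rewrite mul_diag_mx !mxE. Qed.

Lemma DQ X : closedV X -> D (AX X) = d *m Q X.
Proof.
move=> cX; apply/matrixP => i j; rewrite mul_mx_diag !mxE inE.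
rewrite mulrBr mulrBl; congr (_ - _).
  by case: (h i =P j) => [<-|_]; rewrite ?mulr0 ?mul0r ?mulr1 ?mul1r ?cX.
by case: (t i =P j) => [<-|_]; rewrite ?mulr0 ?mul0r ?mulr1 ?mul1r // mulrC.
Qed.

Lemma rankQ X : \rank (Q X) = #|X|. Proof. exact: rank_diag01. Qed.
Lemma rankPE A : \rank (PE A) = #|A|. Proof. exact: rank_diag01. Qed.

Lemma rank_le X : closedV X -> (\rank (D (AX X)) <= minn #|AX X| #|X|)%N.
Proof.
move=> cX; rewrite leq_min; apply/andP; split.
  by rewrite DPE (leq_trans (mxrankM_maxl _ _)) // rankPE.
by rewrite DQ // (leq_trans (mxrankM_maxr _ _)) // rankQ.
Qed.

Definition sat v := (ev K v <= d)%MS.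

Lemma rowd e : row e d = ev K (h e) - indet F nE e *: ev K (t e).
Proof. by apply/rowP => v; rewrite !mxE !(eq_sym v) mulrC. Qed.

Lemma sat_edge e : sat (t e) = sat (h e).
Proof.
have nz : indet F nE e != 0 by apply: indet_neq0.
apply/idP/idP; rewrite /sat => H.
  have -> : ev K (h e) = row e d + indet F nE e *: ev K (t e).
    by rewrite rowd subrK.
  by rewrite addmx_sub ?row_sub // scalemx_sub.
have -> : ev K (t e) = (indet F nE e)^-1 *: ev K (h e) + (- (indet F nE e)^-1) *: row e d.
  rewrite rowd scaleNr scalerBr scalerA mulVf // scale1r opprB addrC subrK //.
by rewrite addmx_sub // scalemx_sub // row_sub.
Qed.

Lemma sat_connect x y : connect (uadj t h) x y -> sat x = sat y.
Proof.
move=> c; have := @closed_connect _ (uadj t h) [pred v | sat v] _ x y c; apply.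
move=> a b /existsP[e /orP[/andP[/eqP<- /eqP<-]|/andP[/eqP<- /eqP<-]]] /=;
  by rewrite !inE sat_edge.
Qed.

Definition cls x0 : {set 'I_nV} := [set y | connect (uadj t h) x0 y].

Lemma cls_closed x0 : closedV (cls x0).
Proof.
move=> e; rewrite !inE; apply/idP/idP => H; apply: (connect_trans H); apply: connect1;
  by apply/existsP; exists e; rewrite !eqxx ?orbT.
Qed.

Lemma DA_sub A : (D A <= d)%MS.
Proof. by rewrite DPE submxMl. Qed.

Lemma rank_ge x0 : (minn #|AX (cls x0)| #|cls x0| <= \rank (D (AX (cls x0))))%N.
Proof.
set X := cls x0; have cX : closedV X := cls_closed x0.
case: (boolP (sat x0)) => s0.
  rewrite (leq_trans (geq_minr _ _)) // -rankQ mxrankS // DQ //.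
  apply/row_subP => i; rewrite rowE.
  case: (boolP (i \in X)) => iX.
    have ci : connect (uadj t h) x0 i by rewrite inE in iX.
    by apply: submxMr; move: s0; rewrite (sat_connect ci).
  rewrite -rowE row_diag_mx mxE (negbTE iX) scale0r sub0mx //.
have eS : Sset F t h (AX X) = AX X.
  apply/setP => e; rewrite !inE.
  case: (boolP (connect (uadj t h) x0 (t e))) => c; rewrite ?andbF ?andbT //.
  apply: contra s0 => H; rewrite (sat_connect c); exact: submx_trans H (DA_sub _).
by rewrite (leq_trans (geq_minl _ _)) // -{1}eS Ulemma.
Qed.

Lemma rank_cls x0 : \rank (D (AX (cls x0))) = minn #|AX (cls x0)| #|cls x0|.
Proof. by apply/eqP; rewrite eqn_leq (rank_le (cls_closed x0)) rank_ge. Qed.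

Lemma closedU X Y : closedV X -> closedV Y -> closedV (X :|: Y).
Proof. by move=> cX cY e; rewrite !inE cX cY. Qed.

Lemma QQ X Y : Q X *m Q Y = Q (X :&: Y).
Proof. by rewrite mulmx_diag; congr diag_mx; apply/rowP => j; rewrite !mxE inE -natrM mulnb. Qed.

Lemma subQ m (C : 'M[K]_(m, nV)) X : closedV X -> (C <= D (AX X))%MS -> C *m Q X = C.
Proof. by move=> cX; rewrite DQ // => /submxP[W ->]; rewrite -!mulmxA QQ setIid. Qed.

Lemma PEsub (A B : {set 'I_nE}) : A \subset B -> D A = PE A *m D B.
Proof.
move=> AB; rewrite !DPE mulmxA mulmx_diag; congr (diag_mx _ *m _); apply/rowP => j.
rewrite !mxE -natrM; case: (boolP (j \in A)) => // jA.
by rewrite (subsetP AB _ jA).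
Qed.

Lemma rank_union X Y : closedV X -> closedV Y -> [disjoint X & Y] ->
  \rank (D (AX (X :|: Y))) = (\rank (D (AX X)) + \rank (D (AX Y)))%N.
Proof.
move=> cX cY dXY; have cXY := closedU cX cY.
have eD : D (AX (X :|: Y)) = D (AX X) + D (AX Y).
  rewrite !DQ // -mulmxDr; congr (_ *m _); rewrite /Q -raddfD /=; congr diag_mx.
  apply/rowP => j; rewrite !mxE inE -natrD; congr (_%:R).
  case: (boolP (j \in X)) => jX; case: (boolP (j \in Y)) => jY //.
  by move: dXY => /disjoint_setI0/setP/(_ j); rewrite !inE jX jY.
have sAX : AX X \subset AX (X :|: Y) by apply/subsetP => e; rewrite !inE => ->.
have sAY : AX Y \subset AX (X :|: Y) by apply/subsetP => e; rewrite !inE => ->; rewrite orbT.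
rewrite -mxrank_disjoint_sum.
  apply: eqmx_rank; apply/andP; split.
    by rewrite eD addmx_sub_adds.
  by rewrite addsmx_sub (PEsub sAX) (PEsub sAY) !submxMl.
set C := (_ :&: _)%MS.
have C1 : C *m Q X = C by apply: subQ => //; apply: capmxSl.
have C2 : C *m Q Y = C by apply: subQ => //; apply: capmxSr.
rewrite -C1 -C2 -mulmxA QQ.
have -> : Y :&: X = set0 by rewrite setIC; apply/disjoint_setI0.
have -> : Q set0 = 0 by apply/matrixP => i j; rewrite !mxE inE mul0rn.
by rewrite mulmx0.
Qed.

Lemma closed_cover (P : {set {set 'I_nV}}) : {in P, forall X, closedV X} -> closedV (cover P).
Proof.
move=> cP e; apply/bigcupP/bigcupP => [[B BP tB]|[B BP tB]]; exists B => //;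
  by rewrite ?(cP _ BP) // -(cP _ BP).
Qed.

Lemma cover_sum (g : {set 'I_nV} -> nat) : g set0 = 0%N ->
  (forall X Y, closedV X -> closedV Y -> [disjoint X & Y] -> g (X :|: Y) = (g X + g Y)%N) ->
  forall P : {set {set 'I_nV}}, trivIset P -> {in P, forall X, closedV X} -> g (cover P) = (\sum_(X in P) g X)%N.
Proof.
move=> g0 gU P; elim: {P}#|P| {-2}P (erefl #|P|) => [|n IH] P cP tP clP.
  by move/eqP: cP; rewrite cards_eq0 => /eqP->; rewrite /cover !big_set0.
have : (0 < #|P|)%N by rewrite cP.
case/card_gt0P => X0 X0P.
rewrite /cover (big_setD1 X0) //= [RHS](big_setD1 X0) //=.
have sub : P :\ X0 \subset P by apply: subsetDl.
have clP' : {in P :\ X0, forall X, closedV X}.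
  by move=> X /(subsetP sub); apply: clP.
have dj : [disjoint X0 & \bigcup_(i in P :\ X0) i].
  apply: bigcup_disjoint => B; rewrite !inE => /andP[ne BP].
  by move/trivIsetP: tP => tP; apply: tP => //; rewrite eq_sym ne.
rewrite (gU _ _ (clP _ X0P) (closed_cover clP') dj).
congr (_ + _)%N; apply: IH.
- by move: cP; rewrite (cardsD1 X0) X0P add1n => -[].
- exact: trivIsetS tP.
- exact: clP'.
Qed.

Lemma uadj_sym : symmetric (uadj t h).
Proof. by move=> x y; apply: eq_existsb => e; rewrite orbC. Qed.

Lemma comp_part : partition (components t h) setT.
Proof.
have -> : components t h = equivalence_partition (connect (uadj t h)) setT.
  by apply: eq_imset => x; apply/setP => y; rewrite !inE.
apply: equivalence_partitionP => x y z _ _ _; split; first exact: connect0.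
have cs := sym_connect_sym uadj_sym.
move=> cxy; apply/idP/idP => [cxz|cyz].
  by apply: connect_trans cxz; rewrite cs.
exact: connect_trans cxy cyz.
Qed.

Lemma maxsub (a b : nat) : Num.max 0 (a%:Z - b%:Z) = ((a - minn a b)%N)%:Z.
Proof.
case: (leqP a b) => ab.
  by rewrite subnn max_l // subr_le0 lez_nat.
by rewrite max_r ?subzn ?subr_ge0 ?lez_nat // ltnW.
Qed.

Lemma main_aux : rho t h = (h1_twist_struct F t h)%:Z.
Proof.
rewrite /rho /h1_twist_struct mxrank_ker.
have eq1 : forall X, X \in components t h ->
    Num.max 0 (h1_comp t h X - 1) = ((#|AX X| - \rank (D (AX X)))%N)%:Z.
  move=> X /imsetP[x0 _ ->]; rewrite -/(cls x0) rank_cls /h1_comp addrK.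
  exact: maxsub.
rewrite (eq_bigr _ eq1) -(big_morph Posz PoszD (erefl _)); congr Posz.
have part := comp_part.
have tP : trivIset (components t h) by case/and3P: part.
have clP : {in components t h, forall X, closedV X}.
  by move=> X /imsetP[x0 _ ->]; apply: cls_closed.
have cov := cover_partition part.
rewrite sumnB; last by move=> X XP; rewrite (leq_trans (rank_le (clP _ XP))) ?geq_minl.
congr (_ - _)%N.
  rewrite -(@cover_sum (fun X => #|AX X|)) //.
  - by rewrite cov (_ : AX setT = setT) ?cardsT ?card_ord //; apply/setP => e; rewrite !inE.
  - by rewrite (_ : AX set0 = set0) ?cards0 //; apply/setP => e; rewrite !inE.
  move=> X Y cX cY dXY; rewrite (_ : AX (X :|: Y) = AX X :|: AX Y); last first.
    by apply/setP => e; rewrite !inE.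
  rewrite cardsU (_ : AX X :&: AX Y = set0) ?cards0 ?subn0 //.
  apply/setP => e; rewrite !inE; apply/negbTE; apply/andP => -[eX eY].
  by move: dXY => /disjoint_setI0/setP/(_ (t e)); rewrite !inE eX eY.
rewrite -(@cover_sum (fun X => \rank (D (AX X)))) //.
- rewrite cov; congr mxrank; apply/matrixP => i j; rewrite !mxE !inE mul1r.
  by [].
- rewrite (_ : D (AX set0) = 0) ?mxrank0 //.
  by apply/matrixP => i j; rewrite !mxE inE in_set0 mul0r.
exact: rank_union.
Qed.

End Main.

Theorem mainTheorem10 (F : fieldType) (nV nE : nat) (t h : 'I_nE -> 'I_nV) :
  rho t h = (h1_twist_struct F t h)%:Z.
Proof. exact: main_aux. Qed.
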